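(* Let $\mathcal{C}$ be a d-category and $f:Y\to X$ a map of $\mathcal{C}$-presheaves. The following are equivalent: (1) $f$ is future open; (2) for every path $\alpha:\mathcal I\to\mathsf{E}X$ and every element $y$ of $Y$ with $\mathsf{E}(f)(y)=\alpha(\bot_{\mathcal I})$ there is a path $\beta:\mathcal I\to\mathsf{E}Y$ with $\beta(\bot_{\mathcal I})=y$ and $\mathsf{E}(f)\circ\beta=\alpha$; (3) for every track object $\Gamma$, every presheaf map $\boldsymbol\alpha:\Gamma\to X$ and every $y\in Y[\mathrm{src}\Gamma]$ with $f(y)=\boldsymbol\alpha(\bot_\Gamma)$ there is a presheaf map $\boldsymbol\beta:\Gamma\to Y$ with $\boldsymbol\beta(\bot_\Gamma)=y$ and $f\circ\boldsymbol\beta=\boldsymbol\alpha$; (4) for all track objects $\Gamma,\Delta$ with $\mathrm{tgt}\Gamma=\mathrm{src}\Delta$, letting $j:\Gamma\to\Gamma*\Delta$ be the canonical map, for all presheaf maps $\boldsymbol\gamma:\Gamma\to Y$ and $\boldsymbol\alpha:\Gamma*\Delta\to X$ with $\boldsymbol\alpha\circ j=f\circ\boldsymbol\gamma$ there is $\boldsymbol\beta:\Gamma*\Delta\to Y$ with $\boldsymbol\beta\circ j=\boldsymbol\gamma$ and $f\circ\boldsymbol\beta=\boldsymbol\alpha$.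
   Context: A d-category is a small category $\mathcal{C}$ with wide subcategories $\mathcal{C}^+$ (formorphisms) and $\mathcal{C}^-$ (backmorphisms) such that an invertible $\varphi$ is in $\mathcal{C}^+$ iff $\varphi^{-1}\in\mathcal{C}^-$; d-functors preserve both. A $\mathcal{C}$-presheaf is a functor $X:\mathcal{C}^{op}\to\mathbf{Set}$; $\mathsf{E}X$ is its category of elements (objects $(U,x)$, $x\in X[U]$; morphisms $(V,y)\to(U,x)$ the $\varphi:V\to U$ with $X[\varphi](x)=y$), a d-category where a morphism is a for-/backmorphism iff its image in $\mathcal{C}$ is; $\mathsf{E}(f)(U,y)=(U,f(y))$. A map $f:Y\to X$ is future open if for every $\varphi\in\mathcal{C}^+(V,U)$, $y\in Y[V]$, $x\in X[U]$ with $X[\varphi](x)=f(y)$ there is $\bar y\in Y[U]$ with $Y[\varphi](\bar y)=y$ and $f(\bar y)=x$. A linear category is a bipointed d-category isomorphic to a finite (possibly empty) concatenation (gluing $\top$ to $\bot$) of $\mathbf S$ (formorphism $\bot\to\top$), $\mathbf T$ (backmorphism $\top\to\bot$), $\mathbf I$ (inverse pair); a path in a d-category $\mathcal D$ is a d-functor from a linear category to $\mathcal D$. The track object of a path $\omega:\mathcal I\to\mathcal{C}$ is $\operatorname{colim}_i\mathcal{C}(-,\omega(i))$ with single start element $\bot$ the image of $\mathrm{id}_{\omega(\bot)}$ (over $\mathrm{src}=\omega(\bot)$) and single accept element $\top$ the image of $\mathrm{id}_{\omega(\top)}$ (over $\mathrm{tgt}=\omega(\top)$); a track object is such an object up to isomorphism.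 For track objects with $\mathrm{tgt}\Gamma=\mathrm{src}\Delta=U$, $\Gamma*\Delta$ is the pushout of $\Gamma\xleftarrow{\top_\Gamma}\mathcal{C}(-,U)\xrightarrow{\bot_\Delta}\Delta$ (elements viewed as maps from representables via Yoneda), with start element from $\Gamma$ and accept from $\Delta$. *)

(* Defs.v *)
From Stdlib Require Import ProofIrrelevance.
From mathcomp Require Import all_boot.
From mathcomp Require Import zify.

Set Implicit Arguments.
Unset Strict Implicit.
Unset Printing Implicit Defensive.

Record cat := Cat {
  ob : Type;
  hom : ob -> ob -> Type;
  idm : forall a, hom a a;
  comp : forall a b c, hom b c -> hom a b -> hom a c;
  comp_idl : forall a b (m : hom a b), comp (idm b) m = m;
  comp_idr : forall a b (m : hom a b), comp m (idm a) = m;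
  comp_assoc : forall a b c d (h : hom c d) (g : hom b c) (f : hom a b),
      comp h (comp g f) = comp (comp h g) f }.
Arguments hom : clear implicits.
Arguments idm {_} _.
Arguments comp {_ _ _ _} _ _.

Record dcat := DCat {
  dc :> cat;
  fwd : forall a b, hom dc a b -> Prop;
  bwd : forall a b, hom dc a b -> Prop;
  fwd_id : forall a, fwd (idm a);
  bwd_id : forall a, bwd (idm a);
  fwd_comp : forall a b c (g : hom dc b c) (f : hom dc a b),
      fwd g -> fwd f -> fwd (comp g f);
  bwd_comp : forall a b c (g : hom dc b c) (f : hom dc a b),
      bwd g -> bwd f -> bwd (comp g f);
  fwd_bwd_inv : forall a b (phi : hom dc a b) (psi : hom dc b a),
      comp psi phi = idm a -> comp phi psi = idm b -> (fwd phi <-> bwd psi) }.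
Arguments fwd {_ _ _} _.
Arguments bwd {_ _ _} _.

Record dfunctor (A B : dcat) := DFun {
  fo : ob A -> ob B;
  fm : forall a b, hom A a b -> hom B (fo a) (fo b);
  fm_id : forall a, fm (idm a) = idm (fo a);
  fm_comp : forall a b c (g : hom A b c) (f : hom A a b),
      fm (comp g f) = comp (fm g) (fm f);
  fm_fwd : forall a b (m : hom A a b), fwd m -> fwd (fm m);
  fm_bwd : forall a b (m : hom A a b), bwd m -> bwd (fm m) }.
Arguments fo {_ _} _ _.
Arguments fm {_ _} _ {_ _} _.

Definition dcomp (A B D : dcat) (F : dfunctor A B) (G : dfunctor B D) :
  dfunctor A D.
Proof.
refine (@DFun A D (fun a => fo G (fo F a)) (fun a b m => fm G (fm F m))
          _ _ _ _).
- by move=> a; rewrite !fm_id.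
- by move=> a b c g f; rewrite !fm_comp.
- by move=> a b m Hm; apply: fm_fwd; apply: fm_fwd.
- by move=> a b m Hm; apply: fm_bwd; apply: fm_bwd.
Defined.

Definition hom_cast (B : cat) (x x' y y' : ob B) (ex : x = x') (ey : y = y')
  (m : hom B x y) : hom B x' y' :=
  match ex in _ = x1, ey in _ = y1 return hom B x1 y1 with
  | erefl, erefl => m end.

Definition dfun_eq (A B : dcat) (F G : dfunctor A B) : Prop :=
  exists e : (forall a, fo F a = fo G a),
    forall a b (m : hom A a b), fm G m = hom_cast (e a) (e b) (fm F m).

Inductive letter := LS | LT | LI.

(* The concatenation  w_0 * w_1 * ... * w_{n-1}  (gluing top to bottom)
   has objects 0..n (object k is the top of block k-1 = bottom of block k),
   bottom = 0, top = n.  It is a thin category: there is exactly one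
   morphism i -> j iff either i <= j and no block in [i,j) is T, or
   j <= i and no block in [j,i) is S.  Formorphisms are the i -> j with
   i <= j, backmorphisms those with j <= i. *)
Definition lhom (w : seq letter) (i j : 'I_(size w).+1) : Prop :=
  forall k : nat,
    ((i <= k < j)%N -> nth LS w k <> LT) /\ ((j <= k < i)%N -> nth LS w k <> LS).

Lemma lhom_id w (i : 'I_(size w).+1) : lhom i i.
Proof. by move=> k; split=> /andP[h1 h2]; lia. Qed.

Lemma lhom_comp w (i j l : 'I_(size w).+1) : lhom j l -> lhom i j -> lhom i l.
Proof.
move=> g f k; split=> /andP[h1 h2].
- case: (ltnP k j) => hj.
  + by apply: (f k).1; apply/andP; split.
  + by apply: (g k).1; apply/andP; split.
- case: (ltnP k j) => hj.
  + by apply: (g k).2; apply/andP; split.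
  + by apply: (f k).2; apply/andP; split.
Qed.

Definition lincat (w : seq letter) : cat.
Proof.
refine (@Cat 'I_(size w).+1 (@lhom w) (@lhom_id w)
          (fun a b c g f => lhom_comp g f) _ _ _);
  by intros; apply: proof_irrelevance.
Defined.

Definition ldcat (w : seq letter) : dcat.
Proof.
refine (@DCat (lincat w) (fun a b _ => (nat_of_ord a <= nat_of_ord b)%N)
          (fun a b _ => (nat_of_ord b <= nat_of_ord a)%N) _ _ _ _ _).
- by move=> a /=.
- by move=> a /=.
- by move=> a b c _ _ /= h1 h2; apply: leq_trans h2 h1.
- by move=> a b c _ _ /= h1 h2; apply: leq_trans h1 h2.
- by move=> a b _ _ _ _ /=.
Defined.

(* a path in a d-category D is a d-functor  ldcat w -> D  for some word w;
   its start is at ord0 (= bottom) and its end at ord_max (= top) *)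

Record presheaf (C : cat) := Presheaf {
  pob :> ob C -> Type;
  pact : forall V U, hom C V U -> pob U -> pob V;
  pact_id : forall U (x : pob U), pact (idm U) x = x;
  pact_comp : forall W V U (psi : hom C W V) (phi : hom C V U) (x : pob U),
      pact (comp phi psi) x = pact psi (pact phi x) }.
Arguments pact {_} _ {_ _} _ _.

Record ntrans (C : cat) (X Y : presheaf C) := NTrans {
  nt :> forall U, X U -> Y U;
  nt_nat : forall V U (phi : hom C V U) (x : X U),
      nt (pact X phi x) = pact Y phi (nt x) }.

Definition rep (C : cat) (U : ob C) : presheaf C.
Proof.
refine (@Presheaf C (fun V => hom C V U) (fun V W phi psi => comp psi phi) _ _).
- by move=> W psi; apply: comp_idr.
- by move=> W V W' psi phi x; apply: comp_assoc.
Defined.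

Definition future_open (C : dcat) (Y X : presheaf C) (f : ntrans Y X) : Prop :=
  forall V U (phi : hom C V U), fwd phi ->
  forall (y : Y V) (x : X U), pact X phi x = f V y ->
  exists ybar : Y U, pact Y phi ybar = y /\ f U ybar = x.

Definition elt (C : cat) (X : presheaf C) := {U : ob C & X U}.

Definition elhom (C : cat) (X : presheaf C) (a b : elt X) :=
  {phi : hom C (projT1 a) (projT1 b) | pact X phi (projT2 b) = projT2 a}.

Lemma sig_eqP (A : Type) (P : A -> Prop) (x y : {a | P a}) :
  proj1_sig x = proj1_sig y -> x = y.
Proof.
case: x => a pa; case: y => b pb /= e; subst b.
by rewrite (proof_irrelevance _ pa pb).
Qed.

Definition elcomp (C : cat) (X : presheaf C) (a b c : elt X)
  (g : elhom b c) (f : elhom a b) : elhom a c.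
Proof.
exists (comp (proj1_sig g) (proj1_sig f)).
by move: g f => [g eg] [f ef] /=; rewrite pact_comp eg ef.
Defined.

Definition elcat (C : cat) (X : presheaf C) : cat.
Proof.
refine (@Cat (elt X) (@elhom C X)
  (fun a => exist _ (idm (projT1 a)) (@pact_id _ X _ (projT2 a)))
  (@elcomp C X) _ _ _).
- by move=> a b m; apply: sig_eqP; apply: comp_idl.
- by move=> a b m; apply: sig_eqP; apply: comp_idr.
- by move=> a b c d h g f; apply: sig_eqP; apply: comp_assoc.
Defined.

Definition E (C : dcat) (X : presheaf C) : dcat.
Proof.
refine (@DCat (elcat X) (fun a b m => fwd (proj1_sig m))
                        (fun a b m => bwd (proj1_sig m)) _ _ _ _ _).
- by move=> a /=; apply: fwd_id.
- by move=> a /=; apply: bwd_id.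
- by move=> a b c g f /= h1 h2; apply: fwd_comp.
- by move=> a b c g f /= h1 h2; apply: bwd_comp.
- move=> a b phi psi /= e1 e2; apply: fwd_bwd_inv.
  + by have := f_equal (@proj1_sig _ _) e1.
  + by have := f_equal (@proj1_sig _ _) e2.
Defined.

Definition Ef_ob (C : cat) (Y X : presheaf C) (f : ntrans Y X) (a : elt Y) :
  elt X := existT _ (projT1 a) (f _ (projT2 a)).

Definition Ef_hom (C : cat) (Y X : presheaf C) (f : ntrans Y X) (a b : elt Y)
  (m : elhom a b) : elhom (Ef_ob f a) (Ef_ob f b).
Proof.
exists (proj1_sig m).
by move: m => [m em] /=; rewrite -nt_nat em.
Defined.

Definition Ef (C : dcat) (Y X : presheaf C) (f : ntrans Y X) :
  dfunctor (E Y) (E X).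
Proof.
refine (@DFun (E Y) (E X) (Ef_ob f) (@Ef_hom C Y X f) _ _ _ _).
- by move=> a; apply: sig_eqP.
- by move=> a b c g h; apply: sig_eqP.
- by move=> a b m.
- by move=> a b m.
Defined.

Definition is_cocone (C : dcat) (w : seq letter) (omega : dfunctor (ldcat w) C)
  (G : presheaf C) (c : forall i, ntrans (rep (fo omega i)) G) : Prop :=
  forall (i j : ob (ldcat w)) (m : hom (ldcat w) i j) V
         (phi : hom C V (fo omega i)),
    c j V (comp (fm omega m) phi) = c i V phi.

Definition is_colimit (C : dcat) (w : seq letter) (omega : dfunctor (ldcat w) C)
  (G : presheaf C) (c : forall i, ntrans (rep (fo omega i)) G) : Prop :=
  forall (Q : presheaf C) (d : forall i, ntrans (rep (fo omega i)) Q),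
    is_cocone d ->
    exists u : ntrans G Q,
      (forall i V phi, u V (c i V phi) = d i V phi) /\
      (forall u' : ntrans G Q, (forall i V phi, u' V (c i V phi) = d i V phi) ->
         forall V x, u' V x = u V x).

(* (G, bot, top) is a track object with src = s, tgt = t: G is (isomorphic
   to, i.e. is) a colimit of C(-,omega(i)) for some path omega, bot is the
   image of id_{omega(bottom)} and top that of id_{omega(top)}. *)
Definition track_object (C : dcat) (G : presheaf C) (s t : ob C)
  (bot : G s) (top : G t) : Prop :=
  exists (w : seq letter) (omega : dfunctor (ldcat w) C)
         (c : forall i, ntrans (rep (fo omega i)) G),
    is_cocone c /\ is_colimit c /\
    existT (fun U => G U) s bot =
      existT (fun U => G U) (fo omega ord0) (c ord0 _ (idm (fo omega ord0))) /\
    existT (fun U => G U) t top =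
      existT (fun U => G U) (fo omega ord_max) (c ord_max _ (idm (fo omega ord_max))).

(* P with j : G -> P, k : D -> P is a pushout of
   G <-(top)- C(-,U) -(bot)-> D, elements viewed as maps via Yoneda *)
Definition is_pushout (C : cat) (G D P : presheaf C) (U : ob C)
  (top : G U) (bot : D U) (j : ntrans G P) (k : ntrans D P) : Prop :=
  (forall V (phi : hom C V U), j V (pact G phi top) = k V (pact D phi bot)) /\
  forall (Q : presheaf C) (g : ntrans G Q) (h : ntrans D Q),
    (forall V (phi : hom C V U), g V (pact G phi top) = h V (pact D phi bot)) ->
    exists u : ntrans P Q,
      (forall V x, u V (j V x) = g V x) /\ (forall V x, u V (k V x) = h V x) /\
      (forall u' : ntrans P Q,
          (forall V x, u' V (j V x) = g V x) -> (forall V x, u' V (k V x) = h V x) ->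
          forall V x, u' V x = u V x).

Arguments track_object {C} G s t bot top.

(* Main.v *)
Require Import Defs.
From mathcomp Require Import all_boot zify.
From Stdlib Require Import ProofIrrelevance Eqdep Classical.

Set Implicit Arguments.
Unset Strict Implicit.
Unset Printing Implicit Defensive.

Section Core.
Variables (C : dcat) (Y X : presheaf C) (f : ntrans Y X) (HF : future_open f).
Variables (w : seq letter) (omega : dfunctor (ldcat w) C)
          (x : forall i, X (fo omega i)).
Hypothesis xc : forall (i j : ob (ldcat w)) (m : hom (ldcat w) i j),
  pact X (fm omega m) (x j) = x i.
Variable y0 : Y (fo omega ord0).
Hypothesis hy0 : f _ y0 = x ord0.

Local Notation n := (size w).

Definition Qk (k : nat) :=
  exists yk : forall i : 'I_n.+1, (i <= k)%N -> Y (fo omega i),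
  [/\ forall i h, f _ (yk i h) = x i, forall h, yk ord0 h = y0 &
      forall (i j : 'I_n.+1) h h' (m : hom (ldcat w) i j),
        pact Y (fm omega m) (yk j h') = yk i h].

Lemma hom_irr (i j : 'I_n.+1) (m m' : hom (ldcat w) i j) : m = m'.
Proof. exact: (proof_irrelevance (lhom i j)). Qed.

Lemma fm_idm (i : 'I_n.+1) (m : hom (ldcat w) i i) : fm omega m = idm _.
Proof. by rewrite (hom_irr m (idm (i : ob (ldcat w)))) fm_id. Qed.

Lemma Q0 : Qk 0.
Proof.
have e : forall i : 'I_n.+1, (i <= 0)%N -> ord0 = i.
  by move=> i h; apply/val_inj => /=; lia.
exists (fun i h => eq_rect ord0 (fun z => Y (fo omega z)) y0 i (e i h)).
split.
- move=> i h; have ei : i = ord0 by apply/val_inj => /=; lia.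
  subst i; by rewrite (proof_irrelevance _ (e _ h) erefl) /=.
- by move=> h; rewrite (proof_irrelevance _ (e _ h) erefl).
- move=> i j h h' m.
  have ei : i = ord0 by apply/val_inj => /=; lia.
  have ej : j = ord0 by apply/val_inj => /=; lia.
  subst i j.
  rewrite (proof_irrelevance _ (e _ h) erefl) (proof_irrelevance _ (e _ h') erefl) /=.
  by rewrite fm_idm pact_id.
Qed.

Lemma Qstep k : (k < n)%N -> Qk k -> Qk k.+1.
Proof.
move=> kn [yk [yf y0e yc]].
have kn1 : (k < n.+1)%N by lia.
have kn2 : (k.+1 < n.+1)%N by lia.
pose K : 'I_n.+1 := Ordinal kn1.
pose K1 : 'I_n.+1 := Ordinal kn2.
pose yK := yk K (leqnn k).
have [ynew [hf [h1 h2]]] : exists ynew : Y (fo omega K1), f _ ynew = x K1 /\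
   (forall m : hom (ldcat w) K1 K, pact Y (fm omega m) yK = ynew) /\
   (forall m : hom (ldcat w) K K1, pact Y (fm omega m) ynew = yK).
{ case: (classic (lhom K1 K)) => [m'|nm'].
  - exists (pact Y (fm omega (m' : hom (ldcat w) K1 K)) yK); split; [|split].
    + rewrite nt_nat /yK yf. exact: xc.
    + by move=> m; rewrite (hom_irr m m').
    + move=> m; rewrite -pact_comp -fm_comp fm_idm pact_id //.
  - have m0 : hom (ldcat w) K K1.
    { move=> l; split => /andP [a b].
      + move=> hT; apply: nm' => l'; split => /andP [a' b'] /=.
        * move: a' b' => /= a' b'; lia.
        * move: a' b' => /= a' b'. have -> : l' = k by lia.
          have el : l = k by move: a b => /= a b; lia.
          by rewrite -el hT.
      + move: a b => /= a b; lia. }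
    have Hf : fwd (fm omega m0) by apply: fm_fwd => /=.
    have [ybar [e1 e2]] := HF Hf (y := yK) (x := x K1) (etrans (xc m0) (esym (yf _ _))).
    exists ybar; split; first done; split.
    + by move=> m; exfalso; apply: nm'; exact: m.
    + by move=> m; rewrite (hom_irr m m0). }
have eqK1 : forall i : 'I_n.+1, (i <= k.+1)%N -> (k < i)%N -> K1 = i.
  by move=> i a b; apply/val_inj => /=; lia.
pose yk' := fun (i : 'I_n.+1) (h : (i <= k.+1)%N) =>
  match leqP i k return Y (fo omega i) with
  | LeqNotGtn hle => yk i hle
  | GtnNotLeq hgt => eq_rect K1 (fun z => Y (fo omega z)) ynew i (eqK1 i h hgt)
  end.
have old : forall (i : 'I_n.+1) h (h' : (i <= k)%N), yk' i h = yk i h'.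
  move=> i h h'; rewrite /yk'; case: (leqP i k) => [hle|hgt].
  - by rewrite (proof_irrelevance _ hle h').
  - exfalso; lia.
have new : forall h, yk' K1 h = ynew.
  move=> h; rewrite /yk'; case: (leqP K1 k) => [hle|hgt].
  - exfalso; move: hle => /=; lia.
  - by rewrite (proof_irrelevance _ (eqK1 _ _ _) erefl).
have classify : forall i : 'I_n.+1, (i <= k.+1)%N -> (k < i)%N -> i = K1.
  by move=> i a b; apply/val_inj => /=; lia.
exists yk'; split.
- move=> i h; case: (leqP i k) => [h'|h'].
  + by rewrite (old i h h') yf.
  + have ei := classify i h h'; subst i; by rewrite new.
- by move=> h; rewrite (old ord0 h (leq0n k)) y0e.
- move=> i j h h' m.
  case: (leqP i k) => [hi|hi]; case: (leqP j k) => [hj|hj].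
  + by rewrite (old i h hi) (old j h' hj) yc.
  + have ej := classify j h' hj; subst j.
    rewrite (old i h hi) new.
    have m1 : hom (ldcat w) i K.
    { move=> l; split => /andP [a b].
      + apply: (m l).1; apply/andP; split; move: a b => /= a b; lia.
      + move: a b => /= a b; lia. }
    have m2 : hom (ldcat w) K K1.
    { move=> l; split => /andP [a b].
      + apply: (m l).1; apply/andP; split; move: a b => /= a b; lia.
      + move: a b => /= a b; lia. }
    rewrite (hom_irr m (@Defs.comp (ldcat w) i K K1 m2 m1)) fm_comp pact_comp h2.
    exact: yc.
  + have ei := classify i h hi; subst i.
    rewrite (old j h' hj) new.
    have m2 : hom (ldcat w) K1 K.
    { move=> l; split => /andP [a b].
      + move: a b => /= a b; lia.
      + apply: (m l).2; apply/andP; split; move: a b => /= a b; lia. }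
    have m1 : hom (ldcat w) K j.
    { move=> l; split => /andP [a b].
      + move: a b => /= a b; lia.
      + apply: (m l).2; apply/andP; split; move: a b => /= a b; lia. }
    rewrite (hom_irr m (@Defs.comp (ldcat w) K1 K j m1 m2)) fm_comp pact_comp (yc K j (leqnn k) hj m1).
    exact: h1.
  + have ei := classify i h hi; subst i.
    have ej := classify j h' hj; subst j.
    by rewrite new fm_idm pact_id new.
Qed.

Lemma core : exists yy : forall i, Y (fo omega i),
  (forall (i j : ob (ldcat w)) (m : hom (ldcat w) i j),
      pact Y (fm omega m) (yy j) = yy i) /\
  (forall i, f _ (yy i) = x i) /\ yy ord0 = y0.
Proof.
have : forall k, (k <= n)%N -> Qk k.
  elim=> [_|k IH kn]; first exact: Q0.
  apply: Qstep; first lia. apply: IH; lia.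
move/(_ n (leqnn n)) => [yk [yf y0e yc]].
exists (fun i => yk i (leq_ord i)); split; last split.
- move=> i j m; exact: yc.
- move=> i; exact: yf.
- exact: y0e.
Qed.
End Core.

Definition yon (C : Defs.cat) (Z : presheaf C) U (z : Z U) : ntrans (rep U) Z.
Proof.
refine (@NTrans C (rep U) Z (fun V psi => pact Z psi z) _).
by move=> V W phi psi /=; rewrite pact_comp.
Defined.

Definition ncomp (C : Defs.cat) (A B D : presheaf C) (g : ntrans B D) (h : ntrans A B) :
  ntrans A D.
Proof.
refine (@NTrans C A D (fun V a => g V (h V a)) _).
by move=> V U phi a; rewrite !nt_nat.
Defined.

Lemma rep_elem (C : Defs.cat) (G : presheaf C) U (c : ntrans (rep U) G) V
  (psi : hom C V U) : c V psi = pact G psi (c U (idm U)).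
Proof. by rewrite -nt_nat /= comp_idl. Qed.

Section Arrow.
Variables (D : dcat) (a b : ob D) (phi : hom D a b) (Hphi : fwd phi).

Definition arr_ob (n : nat) : ob D := if n is 0 then a else b.

Definition arr_hom (n k : nat) : (n <= k)%N -> hom D (arr_ob n) (arr_ob k) :=
  match n, k return (n <= k)%N -> hom D (arr_ob n) (arr_ob k) with
  | 0, 0 => fun _ => idm a
  | 0, S _ => fun _ => phi
  | S _, S _ => fun _ => idm b
  | S _, 0 => fun H => False_rect _ (Bool.diff_false_true H)
  end.

Lemma lhomLS_le (i j : 'I_(size [:: LS]).+1) : lhom i j -> (i <= j)%N.
Proof.
move=> m; case: (leqP i j) => // hji; exfalso.
move: m hji; case: i => [i hi]; case: j => [j hj] /= m hji.
have hi2 : (i < 2)%N by []. apply: ((m 0%N).2) => //=; apply/andP; split; lia.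
Qed.

Lemma arr_hom_id n (h : (n <= n)%N) : arr_hom h = idm _.
Proof. by case: n h. Qed.

Lemma arr_hom_comp n k l (h1 : (n <= l)%N) (h2 : (k <= l)%N) (h3 : (n <= k)%N) :
  arr_hom h1 = Defs.comp (arr_hom h2) (arr_hom h3).
Proof.
case: n h1 h3 => [|n] h1 h3; case: k h2 h3 => [|k] h2 h3 //=;
  case: l h1 h2 => [|l] h1 h2 //=; by rewrite ?comp_idl ?comp_idr.
Qed.

Definition arr : dfunctor (ldcat [:: LS]) D.
Proof.
refine (@DFun (ldcat [:: LS]) D (fun i => arr_ob i)
  (fun i j m => arr_hom (lhomLS_le m)) _ _ _ _).
- by move=> i; apply: arr_hom_id.
- by move=> i j k g h; apply: arr_hom_comp.
- move=> i j m /= _; case: (nat_of_ord i) (nat_of_ord j) (lhomLS_le m) => [|n] [|l] //= _.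
  + exact: fwd_id.
  + exact: fwd_id.
- move=> i j m /= hji; have hij := lhomLS_le m.
  have e : nat_of_ord i = nat_of_ord j by apply/eqP; rewrite eqn_leq hij hji.
  move: (lhomLS_le m); rewrite e => hh; rewrite arr_hom_id; exact: bwd_id.
Defined.
End Arrow.

Section TrackEnd.
Variables (C : dcat) (w : seq letter) (omega : dfunctor (ldcat w) C).
Hypothesis reach : forall i : ob (ldcat w), hom (ldcat w) i ord_max.

Definition tc (i : ob (ldcat w)) : ntrans (rep (fo omega i)) (rep (fo omega ord_max)).
Proof.
refine (@NTrans C (rep (fo omega i)) (rep (fo omega ord_max))
  (fun V psi => Defs.comp (fm omega (reach i)) psi) _).
by move=> V U p q /=; rewrite comp_assoc.
Defined.

Lemma track_end : track_object (rep (fo omega ord_max)) (fo omega ord0) (fo omega ord_max)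
  (tc ord0 _ (idm _)) (tc ord_max _ (idm _)).
Proof.
have hirr : forall (i j : ob (ldcat w)) (m m' : hom (ldcat w) i j), m = m'.
  by move=> i j m m'; exact: (proof_irrelevance (lhom i j)).
have cc : is_cocone tc.
  move=> i j m V p /=; rewrite comp_assoc -fm_comp.
  by rewrite (hirr _ _ (Defs.comp (reach j) m) (reach i)).
exists w, omega, tc; split; first done; split; last by split.
move=> Q d dc; exists (d ord_max); split.
- move=> i V p; rewrite -(dc i ord_max (reach i) V p) //.
- move=> u' hu V z.
  have := hu ord_max V z => /=.
  rewrite (hirr _ _ (reach ord_max) (idm (ord_max : ob (ldcat w)))) fm_id comp_idl.
  by [].
Qed.
End TrackEnd.

Lemma hom_cast_el (C : Defs.cat) (X : presheaf C) (a a' b b' : elt X)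
  (ea : a = a') (eb : b = b') (n : elhom a b)
  (ha : projT1 a = projT1 a') (hb : projT1 b = projT1 b') :
  proj1_sig (@hom_cast (elcat X) a a' b b' ea eb n) = hom_cast ha hb (proj1_sig n).
Proof.
case: a' / ea ha; case: b' / eb hb => hb ha.
by rewrite (proof_irrelevance _ ha erefl) (proof_irrelevance _ hb erefl).
Qed.

Section Main.
Variables (C : dcat) (Y X : presheaf C) (f : ntrans Y X).

Lemma sig_move (G : presheaf C) (alpha : ntrans G X) s s' (bot : G s) (bot' : G s')
  (H : existT (fun U => G U) s bot = existT (fun U => G U) s' bot') (y : Y s) :
  f s y = alpha s bot -> exists y' : Y s', f s' y' = alpha s' bot' /\
     existT (fun U => Y U) s y = existT (fun U => Y U) s' y'.
Proof.
have e := f_equal (@projT1 _ _) H; simpl in e; subst s'.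
have -> := inj_pair2 _ _ _ _ _ H.
by move=> h; exists y; split.
Qed.

Lemma sig_back (G : presheaf C) (beta : ntrans G Y) s s' (bot : G s) (bot' : G s')
  (H : existT (fun U => G U) s bot = existT (fun U => G U) s' bot') (y : Y s) (y' : Y s')
  (Hy : existT (fun U => Y U) s y = existT (fun U => Y U) s' y') :
  beta s' bot' = y' -> beta s bot = y.
Proof.
have e := f_equal (@projT1 _ _) H; simpl in e; subst s'.
have -> := inj_pair2 _ _ _ _ _ H.
by have -> := inj_pair2 _ _ _ _ _ Hy.
Qed.

Lemma yon_cocone (Z : presheaf C) w (omega : dfunctor (ldcat w) C)
  (z : forall i, Z (fo omega i))
  (zc : forall (i j : ob (ldcat w)) (m : hom (ldcat w) i j), pact Z (fm omega m) (z j) = z i) :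
  is_cocone (fun i => yon (z i)).
Proof. by move=> i j m V p /=; rewrite pact_comp zc. Qed.

Lemma p13 : future_open f ->
    forall (G : presheaf C) (s t : ob C) (bot : G s) (top : G t),
      track_object G s t bot top ->
      forall (alpha : ntrans G X) (y : Y s), f s y = alpha s bot ->
      exists beta : ntrans G Y,
        beta s bot = y /\ (forall V x, f V (beta V x) = alpha V x).
Proof.
move=> HF G s t bot top [w [omega [c [cc [cl [eb et]]]]]] alpha y hy.
pose x := fun i => alpha _ (c i _ (idm (fo omega i))).
have xc : forall (i j : ob (ldcat w)) (m : hom (ldcat w) i j),
    pact X (fm omega m) (x j) = x i.
  move=> i j m; rewrite /x -nt_nat -nt_nat /= comp_idl -(comp_idr (fm omega m)).
  by rewrite cc.
have [y0 [hy0 ey]] := sig_move eb hy.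
have [yy [yc [yf yy0]]] := core HF xc hy0.
have [beta [hb _]] := cl Y _ (yon_cocone yc).
exists beta; split.
- apply: (sig_back eb ey); rewrite hb /= pact_id //.
- have [u [_ uu]] := cl X _ (yon_cocone xc).
  move=> V z.
  have -> : f V (beta V z) = ncomp f beta V z by [].
  rewrite (uu (ncomp f beta)); last first.
    by move=> i W p /=; rewrite hb /= nt_nat yf.
  rewrite (uu alpha) //.
  by move=> i W p /=; rewrite rep_elem nt_nat.
Qed.

Lemma p14 : future_open f ->
    forall (G D : presheaf C) (s U t : ob C)
           (botG : G s) (topG : G U) (botD : D U) (topD : D t),
      track_object G s U botG topG -> track_object D U t botD topD ->
      forall (GD : presheaf C) (j : ntrans G GD) (k : ntrans D GD),
        is_pushout topG botD j k ->
      forall (gamma : ntrans G Y) (alpha : ntrans GD X),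
        (forall V x, alpha V (j V x) = f V (gamma V x)) ->
      exists beta : ntrans GD Y,
        (forall V x, beta V (j V x) = gamma V x) /\
        (forall V x, f V (beta V x) = alpha V x).
Proof.
move=> HF G D s U t botG topG botD topD TG TD GD j k [psq pu] gamma alpha ha.
have hy : f U (gamma U topG) = ncomp alpha k U botD.
  rewrite -ha /=; have := psq U (idm U); by rewrite !pact_id => ->.
have [bD [bD0 bDf]] := p13 HF TD hy.
have hgb : forall V (p : hom C V U), gamma V (pact G p topG) = bD V (pact D p botD).
  by move=> V p; rewrite !nt_nat bD0.
have [u [uj [uk _]]] := pu Y gamma bD hgb.
exists u; split; first exact: uj.
have hfa : forall V (p : hom C V U),
    ncomp f gamma V (pact G p topG) = ncomp alpha k V (pact D p botD).
  by move=> V p /=; rewrite -ha psq.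
have [v [_ [_ vv]]] := pu X (ncomp f gamma) (ncomp alpha k) hfa.
move=> V z.
have -> : f V (u V z) = ncomp f u V z by [].
rewrite (vv (ncomp f u)); first last.
- by move=> W d /=; rewrite uk bDf.
- by move=> W d /=; rewrite uj.
by rewrite (vv alpha).
Qed.

Lemma reachLS (i : ob (ldcat [:: LS])) : hom (ldcat [:: LS]) i ord_max.
Proof.
move=> l; split => /andP [a b]; first by case: l {a b} => [|[|l]].
exfalso; move: a b; case: i => [i hi] /= a b.
have hi2 : (i < 2)%N by []. lia.
Qed.

Lemma p31 :
  (forall (G : presheaf C) (s t : ob C) (bot : G s) (top : G t),
      track_object G s t bot top ->
      forall (alpha : ntrans G X) (y : Y s), f s y = alpha s bot ->
      exists beta : ntrans G Y,
        beta s bot = y /\ (forall V x, f V (beta V x) = alpha V x)) ->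
  future_open f.
Proof.
move=> H3 V U phi Hphi y x hx.
pose omega := arr (D := C) Hphi.
have T := @track_end C [:: LS] omega reachLS.
have := H3 (rep U) V U _ _ T (yon x) y.
case.
  by rewrite /= comp_idr hx.
move=> beta [hb hf]; exists (beta U (idm U)); split.
- rewrite -nt_nat /= comp_idl. move: hb => /=. by rewrite comp_idr.
- by rewrite hf /= pact_id.
Qed.

Definition nid (Z : presheaf C) : ntrans Z Z := @NTrans C Z Z (fun V z => z) (fun _ _ _ _ => erefl).

Lemma p41 :
  (forall (G D : presheaf C) (s U t : ob C)
           (botG : G s) (topG : G U) (botD : D U) (topD : D t),
      track_object G s U botG topG -> track_object D U t botD topD ->
      forall (GD : presheaf C) (j : ntrans G GD) (k : ntrans D GD),
        is_pushout topG botD j k ->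
      forall (gamma : ntrans G Y) (alpha : ntrans GD X),
        (forall V x, alpha V (j V x) = f V (gamma V x)) ->
      exists beta : ntrans GD Y,
        (forall V x, beta V (j V x) = gamma V x) /\
        (forall V x, f V (beta V x) = alpha V x)) ->
  future_open f.
Proof.
move=> H4 V U phi Hphi y x hx.
have TG := @track_end C [:: LS] (arr (fwd_id V)) reachLS.
have TD := @track_end C [:: LS] (arr Hphi) reachLS.
have PO : is_pushout (tc (arr (fwd_id V)) reachLS ord_max _ (idm _))
   (tc (arr Hphi) reachLS ord0 _ (idm _)) (yon (Z := rep U) phi) (nid (rep U)).
  split.
  + by move=> W p /=; rewrite !comp_idl !comp_idr.
  + move=> Q g h hgh; exists h; split; last split.
    * move=> W p /=; have := hgh W p => /=. by rewrite !comp_idl !comp_idr => ->.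
    * by [].
    * by move=> u' _ hu W z; rewrite -hu.
have HY : forall W (p : rep V W), yon x W (yon (Z := rep U) phi W p) = f W (yon y W p).
  by move=> W p /=; rewrite pact_comp hx nt_nat.
have [beta [bj bf]] := H4 _ _ _ _ _ _ _ _ _ TG TD _ _ _ PO (yon y) (yon x) HY.
exists (beta U (idm U)); split.
- rewrite -nt_nat /= comp_idl. have := bj V (idm V) => /=. by rewrite comp_idr pact_id.
- by rewrite bf /= pact_id.
Qed.
End Main.

Definition prf (C : dcat) (X : presheaf C) : dfunctor (E X) C.
Proof.
refine (@DFun (E X) C (fun a => projT1 a) (fun a b m => proj1_sig m) _ _ _ _).
- by [].
- by [].
- by move=> a b m h.
- by move=> a b m h.
Defined.

Definition liftF (C : dcat) (Y X : presheaf C) w (alpha : dfunctor (ldcat w) (E X))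
  (yy : forall i : ob (ldcat w), Y (projT1 (fo alpha i)))
  (yc : forall (i j : ob (ldcat w)) (m : hom (ldcat w) i j),
      pact Y (proj1_sig (fm alpha m)) (yy j) = yy i) : dfunctor (ldcat w) (E Y).
Proof.
  refine (@DFun (ldcat w) (E Y) (fun i => existT (fun U => Y U) (projT1 (fo alpha i)) (yy i))
     (fun i j m => exist _ (proj1_sig (fm alpha m)) (yc i j m)) _ _ _ _).
  - by move=> i; apply: sig_eqP; rewrite /= fm_id.
  - by move=> i j k g h; apply: sig_eqP; rewrite /= fm_comp.
  - by move=> i j m h; exact: (fm_fwd alpha h).
  - by move=> i j m h; exact: (fm_bwd alpha h).
Defined.

Section P2.
Variables (C : dcat) (Y X : presheaf C) (f : ntrans Y X).

Lemma sig_fiber (A0 : elt X) (y : elt Y) : Ef_ob f y = A0 ->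
  exists y0 : Y (projT1 A0), f _ y0 = projT2 A0 /\ existT _ (projT1 A0) y0 = y.
Proof. by move=> <-; exists (projT2 y); case: y. Qed.

Lemma p12 : future_open f ->
    forall (w : seq letter) (alpha : dfunctor (ldcat w) (E X)) (y : ob (E Y)),
      fo (Ef f) y = fo alpha ord0 ->
      exists beta : dfunctor (ldcat w) (E Y),
        fo beta ord0 = y /\ dfun_eq (dcomp beta (Ef f)) alpha.
Proof.
move=> HF w alpha y hy.
pose omega := dcomp alpha (prf X).
pose x := fun i : ob (ldcat w) => projT2 (fo alpha i) : X (fo omega i).
have xc : forall (i j : ob (ldcat w)) (m : hom (ldcat w) i j),
    pact X (fm omega m) (x j) = x i.
  by move=> i j m; exact: (proj2_sig (fm alpha m)).
have [y0 [hy0 ey]] := sig_fiber hy.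
have [yy [yc [yf yy0]]] := core (omega := omega) HF xc hy0.
pose beta := liftF yc.
exists beta; split.
- by rewrite /= yy0.
- have e : forall a, fo (dcomp beta (Ef f)) a = fo alpha a.
    by move=> a; rewrite /= /Ef_ob /= yf /x; case: (fo alpha a).
  exists e => a b m; apply: sig_eqP.
  by rewrite (@hom_cast_el C X _ _ _ _ (e a) (e b) _ erefl erefl).
Qed.

Lemma extract V U (B0 B1 : elt Y) (mm : elhom B0 B1) (y : Y V) (x : X U) (phi : hom C V U)
  (b0 : B0 = existT (fun U => Y U) V y) (e1 : Ef_ob f B1 = existT (fun U => X U) U x)
  (ha : projT1 B0 = V) (hb : projT1 B1 = U) (hphi : phi = hom_cast ha hb (proj1_sig mm)) :
  exists ybar : Y U, pact Y phi ybar = y /\ f U ybar = x.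
Proof.
subst B0; move: mm e1 hb hphi; case: B1 => U1 y1 mm e1 hb hphi; simpl in hb.
subst U1; rewrite (proof_irrelevance _ ha erefl) /= in hphi.
have := inj_pair2 _ _ _ _ _ e1 => /= fy.
exists y1; split => //; move: mm hphi => [psi hpsi] /= ->; exact: hpsi.
Qed.

Lemma p21 :
  (forall (w : seq letter) (alpha : dfunctor (ldcat w) (E X)) (y : ob (E Y)),
      fo (Ef f) y = fo alpha ord0 ->
      exists beta : dfunctor (ldcat w) (E Y),
        fo beta ord0 = y /\ dfun_eq (dcomp beta (Ef f)) alpha) ->
  future_open f.
Proof.
move=> H2 V U phi Hphi y x hx.
pose A0 : elt X := existT (fun U => X U) V (pact X phi x).
pose A1 : elt X := existT (fun U => X U) U x.
pose pe : elhom A0 A1 := exist _ phi erefl.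
have Hpe : @fwd (E X) A0 A1 pe by [].
have hy : fo (Ef f) (existT (fun U => Y U) V y) = fo (arr Hpe) ord0 by rewrite /= /Ef_ob /= -hx.
have [beta [b0 [e he]]] := H2 [:: LS] (arr Hpe) _ hy.
have hm := f_equal (@proj1_sig _ _) (he ord0 ord_max (reachLS ord0)).
refine (@extract V U (fo beta ord0) (fo beta ord_max) (fm beta (reachLS ord0)) y x phi b0 (e ord_max)
           (f_equal (@projT1 _ _) b0) (f_equal (@projT1 _ _) (e ord_max)) _).
have H := @hom_cast_el C X _ _ _ _ (e ord0) (e ord_max) (fm (dcomp beta (Ef f)) (reachLS ord0))
  (f_equal (@projT1 _ _) b0) (f_equal (@projT1 _ _) (e ord_max)).
exact: (etrans hm H).
Qed.
End P2.

Unset Implicit Arguments.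

Theorem lemma12 (C : dcat) (Y X : presheaf C) (f : ntrans Y X) :
  let P1 := future_open f in
  let P2 :=
    forall (w : seq letter) (alpha : dfunctor (ldcat w) (E X)) (y : ob (E Y)),
      fo (Ef f) y = fo alpha ord0 ->
      exists beta : dfunctor (ldcat w) (E Y),
        fo beta ord0 = y /\ dfun_eq (dcomp beta (Ef f)) alpha in
  let P3 :=
    forall (G : presheaf C) (s t : ob C) (bot : G s) (top : G t),
      track_object G s t bot top ->
      forall (alpha : ntrans G X) (y : Y s), f s y = alpha s bot ->
      exists beta : ntrans G Y,
        beta s bot = y /\ (forall V x, f V (beta V x) = alpha V x) in
  let P4 :=
    forall (G D : presheaf C) (s U t : ob C)
           (botG : G s) (topG : G U) (botD : D U) (topD : D t),
      track_object G s U botG topG -> track_object D U t botD topD ->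
      forall (GD : presheaf C) (j : ntrans G GD) (k : ntrans D GD),
        is_pushout topG botD j k ->
      forall (gamma : ntrans G Y) (alpha : ntrans GD X),
        (forall V x, alpha V (j V x) = f V (gamma V x)) ->
      exists beta : ntrans GD Y,
        (forall V x, beta V (j V x) = gamma V x) /\
        (forall V x, f V (beta V x) = alpha V x) in
  (P1 <-> P2) /\ (P1 <-> P3) /\ (P1 <-> P4).
Proof.
move=> P1 P2 P3 P4; split; [|split]; split.
- exact: p12.
- exact: p21.
- exact: p13.
- exact: p31.
- exact: p14.
- exact: p41.
Qed.
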